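(* Let $\Omega$ be an infinite set and $0\leq k\leq i\leq j$ integers with $k<j$. If $k>0$, then in each of the graphs $\Gamma^\Omega_{i,j;k}$ and $\Gamma^\Omega_{i,j;\geq k}$ each bipart contains a finite set of vertices that have no common neighbour. In the graph $\Gamma^\Omega_{i,j;0}$, every finite set of vertices contained in one bipart has a common neighbour.
   Context: $\Gamma^\Omega_{i,j;k}$ is the bipartite graph with biparts the $i$-subsets and the $j$-subsets of $\Omega$ (two copies if $i=j$), an $i$-subset adjacent to a $j$-subset iff their intersection has exactly $k$ elements; $\Gamma^\Omega_{i,j;\geq k}$ is defined likewise with adjacency iff the intersection has at least $k$ elements. *)

(* Defs.v *)
From HB Require Import structures.
From mathcomp Require Import all_boot.
From mathcomp Require Import finmap.
Set Implicit Arguments. Unset Strict Implicit. Unset Printing Implicit Defensive.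
Local Open Scope fset_scope.

(* Omega is modelled by a choiceType T; its finite subsets are {fset T}. *)
Definition infinite_type (T : choiceType) : Prop :=
  forall s : seq T, exists x : T, x \notin s.

(* Vertices of Gamma^Omega_{i,j;P}: pairs (b, A); b = false is the bipart of
   i-subsets, b = true the bipart of j-subsets (two copies if i = j). *)
Definition vertex (T : choiceType) := (bool * {fset T})%type.

Definition is_vertex (T : choiceType) (i j : nat) (v : vertex T) : bool :=
  #|` v.2| == (if v.1 then j else i).

(* Adjacency: vertices in different biparts whose intersection size satisfies P.
   P = (fun n => n == k) gives Gamma_{i,j;k}; P = (fun n => k <= n) gives
   Gamma_{i,j;>=k}. *)
Definition Gamma_adj (T : choiceType) (P : nat -> bool) (v w : vertex T) : bool :=
  (v.1 != w.1) && P #|` v.2 `&` w.2|.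

Definition adj_eq (k : nat) : nat -> bool := fun n => n == k.
Definition adj_ge (k : nat) : nat -> bool := fun n => k <= n.

Definition common_neighbour (T : choiceType) (i j : nat) (P : nat -> bool)
  (S : seq (vertex T)) (w : vertex T) : Prop :=
  is_vertex i j w /\ forall v, v \in S -> Gamma_adj P v w.

Definition in_bipart (T : choiceType) (i j : nat) (b : bool) (S : seq (vertex T)) : Prop :=
  forall v, v \in S -> is_vertex i j v /\ v.1 = b.

(* Main.v *)
Require Import Defs.
From mathcomp Require Import all_boot finmap.
Set Implicit Arguments. Unset Strict Implicit. Unset Printing Implicit Defensive.
Local Open Scope fset_scope.

Lemma fresh_set (T : choiceType) (HT : infinite_type T) (X : {fset T}) (n : nat) :
  exists A : {fset T}, #|` A| = n /\ A `&` X = fset0.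
Proof.
elim: n => [|n [A [HA HX]]]; first by exists fset0; rewrite cardfs0 fset0I.
have [x Hx] := HT (enum_fset (A `|` X)).
exists (x |` A); split.
  rewrite cardfsU1 HA; move: Hx; rewrite in_fsetU negb_or => /andP[-> _] //.
apply/fsetP => y; rewrite !inE.
case: (y =P x) => [->|_] /=.
  by move: Hx; rewrite in_fsetU negb_or => /andP[_ /negbTE ->].
by move/fsetP: HX => /(_ y); rewrite !inE.
Qed.

Lemma family (T : choiceType) (HT : infinite_type T) (m n : nat) :
  exists (L : seq {fset T}) (U : {fset T}),
    size L = n /\ (forall A, A \in L -> #|` A| = m) /\
    (forall B : {fset T}, (forall A, A \in L -> 0 < #|` A `&` B|) -> n <= #|` B `&` U|).
Proof.
elim: n => [|n [L [U [HL [Hm HB]]]]]; first by exists [::], fset0.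
have [A [HA HAU]] := fresh_set HT U m.
exists (A :: L), (A `|` U); split; first by rewrite /= HL.
split; first by move=> A'; rewrite inE => /orP[/eqP->|/Hm].
move=> B HB'.
have h1 : 0 < #|` B `&` A| by rewrite fsetIC; apply: HB'; rewrite inE eqxx.
have h2 : n <= #|` B `&` U| by apply: HB => A' HA'; apply: HB'; rewrite inE HA' orbT.
have h3 : (B `&` A) `&` (B `&` U) = fset0.
  apply/fsetP => y; rewrite !inE.
  move/fsetP: HAU => /(_ y); rewrite !inE.
  by case: (y \in A); case: (y \in B); case: (y \in U).
have := cardfsUI (B `&` A) (B `&` U).
rewrite h3 cardfs0 addn0 -fsetIUr => ->.
by rewrite -(prednK h1) addSn ltnS (leq_trans h2 (leq_addl _ _)).
Qed.

Local Close Scope fset_scope.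
Theorem lemma4p4 (T : choiceType) (HT : infinite_type T) (i j k : nat)
  (Hki : k <= i) (Hij : i <= j) (Hkj : k < j) :
  (0 < k ->
     forall P, (P = adj_eq k \/ P = adj_ge k) ->
     forall b : bool, exists S : seq (vertex T),
       in_bipart i j b S /\ ~ (exists w, common_neighbour i j P S w))
  /\
  (forall (b : bool) (S : seq (vertex T)), in_bipart i j b S ->
     exists w, common_neighbour i j (adj_eq 0) S w).
Proof.
Local Open Scope fset_scope.
split.
  move=> k0 P HP b.
  pose c := if b then i else j.
  have [L [U [HL [Hm HB]]]] := family HT (if b then j else i) c.+1.
  exists [seq (b, A) | A <- L]; split.
    move=> v /mapP [A HA ->]; split => //; by rewrite /is_vertex /= Hm.
  move=> [[wb W] [Hw Hadj]].
  have Hwb : wb = ~~ b.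
    have [A0 HA0] : exists A0, A0 \in L by move: HL; case: (L) => // A0 L' _; exists A0; rewrite inE eqxx.
    have := Hadj (b, A0) (map_f _ HA0); rewrite /Gamma_adj /=.
    by case/andP => H _; move: H; case: (wb); case: (b).
  have : c.+1 <= #|` W `&` U|.
    apply: HB => A HA; have := Hadj (b, A) (map_f _ HA); rewrite /Gamma_adj /=.
    case/andP => _; case: HP => ->; rewrite /adj_eq /adj_ge.
      by move/eqP ->.
    by move=> H; apply: leq_trans H.
  have : #|` W `&` U| <= #|` W| by apply: fsubset_leq_card; apply: fsubsetIl.
  move: Hw; rewrite /is_vertex /= Hwb /c => /eqP ->.
  case: (b) => /= h1 h2; have := leq_trans h2 h1; by rewrite ltnn.
move=> b S HS.
pose X := \bigcup_(v <- S) v.2.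
have [W [HW HWX]] := fresh_set HT X (if b then i else j).
exists (~~ b, W); split; first by rewrite /is_vertex /= HW; case: (b).
move=> v Hv; have [_ Hb] := HS v Hv.
rewrite /Gamma_adj /= Hb.
have -> : (b != ~~ b) = true by case: (b).
rewrite /= /adj_eq cardfs_eq0; apply/eqP/fsetP => y; rewrite !inE.
move/fsetP: HWX => /(_ y); rewrite !inE.
case: (y \in W); rewrite ?andbF ?andbT //= => HX.
apply/negbTE/negP => Hy; move/negbT: HX => /negP; apply.
by apply/bigfcupP; exists v => //; rewrite Hv.
Qed.
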